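(* For $n\in\mathcal{N}_{z_q}$, let $L_n=\{(x_\gamma,y_\gamma):\gamma\in\Gamma_{z_q,n}\}$ and \[ \mathcal{L}_n=\{(x,y)\in\mathbb{R}^2:\ x^2+y^2=n^2-4\lambda^4,\ y\equiv n \pmod{2\lambda^2},\ x\equiv 0\pmod{\lambda}\}. \] Then $L_n=\mathcal{L}_n$, and $|\mathcal{L}_n|=2c_n\,r_K(n^2-4\lambda^4)$, where $c_n=1/2$ if ($q$ even and $2\mid n$) or ($q$ odd and $q\mid 2n$), and $c_n=1/4$ otherwise.
   Context: Let $q\in\{3,4,7,8,11,19,43,67,163\}$, $K$ the imaginary quadratic field of discriminant $-q$ (class number one), ring of integers $\mathcal{O}_K$; $r_K(M)$ is the number of elements of $\mathcal{O}_K$ of norm $M$. Let $z_q=\mu+i\lambda$ with $\mu=0$ if $q\in\{4,8\}$, $\mu=1/2$ otherwise, $\lambda=\sqrt q/2$. $\mathbb{H}$ is the upper half-plane with hyperbolic distance $\rho$, $\cosh\rho(z,w)=1+\frac{|z-w|^2}{2\,\mathrm{Im}(z)\mathrm{Im}(w)}$; $\Gamma=\mathrm{PSL}(2,\mathbb{Z})$; $\mathcal{R}(\gamma;z_q)=2\lambda^2\cosh\rho(z_q,\gamma z_q)$, $\mathcal{N}_{z_q}=\{\mathcal{R}(\gamma;z_q):\gamma\in\Gamma\}$, $\Gamma_{z_q,n}=\{\gamma:\mathcal{R}(\gamma;z_q)=n\}$. Congruences $y\equiv n\pmod{2\lambda^2}$, $x\equiv0\pmod\lambda$ mean $(y-n)/(2\lambda^2)\in\mathbb{Z}$,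 $x/\lambda\in\mathbb{Z}$. For $\gamma=\begin{pmatrix}a&b\\c&d\end{pmatrix}$ with $n=\mathcal{R}(\gamma;z_q)$: $x_\gamma=2\lambda((\mu a+b)(\mu c+d)+\lambda^2ac-\mu((\mu c+d)^2+\lambda^2c^2))$, $y_\gamma=n-2\lambda^2((\mu c+d)^2+\lambda^2c^2)$. *)

(* Defs.v *)
From Stdlib Require Import Reals Lra Lia ZArith List ClassicalDescription.
From Coquelicot Require Import Coquelicot.
Import ListNotations.
Open Scope R_scope.

Definition qlist : list nat := [3;4;7;8;11;19;43;67;163]%nat.

Definition lam (q : nat) : R := sqrt (INR q) / 2.
Definition mu (q : nat) : R :=
  if (Nat.eqb q 4 || Nat.eqb q 8)%bool then 0 else 1/2.

Definition zq (q : nat) : C := (mu q, lam q).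

Definition mobius (a b c d : Z) (z : C) : C :=
  Cdiv (Cplus (Cmult (RtoC (IZR a)) z) (RtoC (IZR b)))
       (Cplus (Cmult (RtoC (IZR c)) z) (RtoC (IZR d))).

Definition cosh_rho (z w : C) : R :=
  1 + (Cmod (Cminus z w)) ^ 2 / (2 * Im z * Im w).

(* (a b; c d) in SL(2,Z); PSL(2,Z) = SL(2,Z)/{±1}, all quantities below are
   invariant under (a,b,c,d) -> (-a,-b,-c,-d). *)
Definition in_SL2Z (a b c d : Z) : Prop := (a * d - b * c)%Z = 1%Z.

Definition Rval (q : nat) (a b c d : Z) : R :=
  2 * lam q ^ 2 * cosh_rho (zq q) (mobius a b c d (zq q)).

Definition in_Nzq (q : nat) (n : R) : Prop :=
  exists a b c d : Z, in_SL2Z a b c d /\ Rval q a b c d = n.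

Definition x_gamma (q : nat) (a b c d : Z) : R :=
  let m := mu q in let l := lam q in
  let a' := IZR a in let b' := IZR b in let c' := IZR c in let d' := IZR d in
  2 * l * ((m * a' + b') * (m * c' + d') + l ^ 2 * a' * c'
           - m * ((m * c' + d') ^ 2 + l ^ 2 * c' ^ 2)).

Definition y_gamma (q : nat) (n : R) (c d : Z) : R :=
  let m := mu q in let l := lam q in
  let c' := IZR c in let d' := IZR d in
  n - 2 * l ^ 2 * ((m * c' + d') ^ 2 + l ^ 2 * c' ^ 2).

Definition L_set (q : nat) (n : R) (p : R * R) : Prop :=
  exists a b c d : Z, in_SL2Z a b c d /\ Rval q a b c d = n /\
    fst p = x_gamma q a b c d /\ snd p = y_gamma q n c d.

Definition is_int (r : R) : Prop := exists k : Z, r = IZR k.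

Definition Lcal (q : nat) (n : R) (p : R * R) : Prop :=
  let x := fst p in let y := snd p in
  x ^ 2 + y ^ 2 = n ^ 2 - 4 * lam q ^ 4 /\
  is_int ((y - n) / (2 * lam q ^ 2)) /\
  is_int (x / lam q).

(* O_K = Z[z_q] (z_q generates the ring of integers in all nine cases);
   the element a + b z_q is encoded by the pair (a,b), and its norm is |a + b z_q|^2. *)
Definition normK (q : nat) (ab : Z * Z) : R :=
  (Cmod (Cplus (RtoC (IZR (fst ab))) (Cmult (RtoC (IZR (snd ab))) (zq q)))) ^ 2.

Definition divR (m : Z) (x : R) : Prop := exists k : Z, x = IZR k * IZR m.

Definition cn_cond (q : nat) (n : R) : Prop :=
  (Nat.Even q /\ divR 2 n) \/ (~ Nat.Even q /\ divR (Z.of_nat q) (2 * n)).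

Definition c_n (q : nat) (n : R) : R :=
  if excluded_middle_informative (cn_cond q n) then 1/2 else 1/4.

(* Main.v *)
Require Import Defs.
From Stdlib Require Import Reals ZArith List Lia Lra Znumtheory Bool ClassicalDescription.
From Coquelicot Require Import Coquelicot.
Import ListNotations.
Open Scope R_scope.

Open Scope R_scope.

Ltac zpush := repeat first [rewrite plus_IZR | rewrite mult_IZR | rewrite opp_IZR | rewrite minus_IZR].

Definition f0z (t e c d : Z) : Z := (e * c * c + t * c * d + d * d)%Z.
Definition Bfz (t e a b c d : Z) : Z := (2 * e * a * c + t * (a * d + b * c) + 2 * b * d)%Z.

Definition tZ (q : nat) : Z := if (Nat.eqb q 4 || Nat.eqb q 8)%bool then 0%Z else 1%Z.
Definition eZ (q : nat) : Z := ((Z.of_nat q + tZ q) / 4)%Z.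
Definition jg q a b c d : Z := (Bfz (tZ q) (eZ q) a b c d - tZ q * f0z (tZ q) (eZ q) c d)%Z.
Definition Fw q a b c d : Z := f0z (tZ q) (eZ q) (c * tZ q + d - a) (- (c * eZ q + b)).

Lemma qfacts q : In q qlist -> (4 * eZ q = Z.of_nat q + tZ q)%Z /\ (tZ q = 0 \/ tZ q = 1)%Z
  /\ mu q = IZR (tZ q) / 2.
Proof.
  unfold qlist; simpl; intros H.
  repeat (destruct H as [<-|H]; [unfold eZ, tZ, mu; simpl; split;[reflexivity|split;[lia|lra]]|]).
  destruct H.
Qed.

Lemma qpos q : In q qlist -> (0 < Z.of_nat q)%Z.
Proof. unfold qlist; simpl; intros H. repeat (destruct H as [<-|H]; [simpl; lia|]). destruct H. Qed.

Lemma lam_pos q : In q qlist -> 0 < lam q.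
Proof. intros Hq. pose proof (qpos q Hq). unfold lam. apply Rdiv_lt_0_compat; [apply sqrt_lt_R0; apply lt_0_INR; lia| lra]. Qed.
Lemma lam2 q : lam q ^ 2 = IZR (Z.of_nat q) / 4.
Proof. unfold lam. rewrite <- INR_IZR_INZ. field_simplify. rewrite pow2_sqrt. lra. apply pos_INR. Qed.

Lemma gen (m l a b c d : R) : 0 < l -> a * d - b * c = 1 ->
  let z := (m, l) : C in
  let g := Cdiv (Cplus (Cmult (RtoC a) z) (RtoC b)) (Cplus (Cmult (RtoC c) z) (RtoC d)) in
  2 * l ^ 2 * (1 + (Cmod (Cminus z g)) ^ 2 / (2 * Im z * Im g)) =
   2 * l ^ 2 + ((c * (m * m - l * l) + (d - a) * m - b) ^ 2 + (l * (2 * m * c + d - a)) ^ 2).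
Proof.
  intros Hl Hd z g.
  set (K := (c * m + d) ^ 2 + (c * l) ^ 2).
  assert (HK : 0 < K).
  { unfold K. destruct (Req_dec c 0) as [Hc|Hc].
    - subst. assert (d <> 0) by (intro; subst; lra).
      assert (0 < d^2) by (apply pow2_gt_0; auto). replace ((0*m+d)^2 + (0*l)^2) with (d^2) by ring. lra.
    - assert (0 < (c*l)^2) by (apply pow2_gt_0; apply Rmult_integral_contrapositive; split; lra). assert (0 <= (c*m+d)^2) by apply pow2_ge_0. lra. }
  assert (Hg : g = (((a*m+b)*(c*m+d) + a*l*(c*l))/K, ((a*m+b)*(-(c*l)) + a*l*(c*m+d))/K)).
  { unfold g, z, Cdiv, Cminus, Cplus, Cmult, Cinv, Copp, RtoC. simpl.
    replace ((c * m - 0 * l + d) * ((c * m - 0 * l + d) * 1) + (c * l + 0 * m + 0) * ((c * l + 0 * m + 0) * 1)) with K by (unfold K; ring).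
    f_equal; field; lra. }
  assert (HIm : Im g = l / K).
  { rewrite Hg. simpl. transitivity (l*(a*d-b*c)/K); [field; lra| rewrite Hd; field; lra]. }
  assert (H1 : (Cmod (Cminus z g)) ^ 2 = ((c * (m * m - l * l) + (d - a) * m - b) ^ 2 + (l * (2 * m * c + d - a)) ^ 2) / K).
  { unfold Cmod. rewrite pow2_sqrt by (apply Rplus_le_le_0_compat; apply pow2_ge_0).
    rewrite Hg. unfold z, Cdiv, Cminus, Cplus, Cmult, Cinv, Copp, RtoC, Im. simpl.
    unfold K. field. fold K. lra. }
  rewrite H1, HIm. unfold z, Im; simpl. field. lra.
Qed.

Lemma W_id t e Q a b c d l : (t = 0 \/ t = 1)%Z -> (4 * e = Q + t)%Z -> l ^ 2 = IZR Q / 4 ->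
  let m := IZR t / 2 in
  (IZR c * (m * m - l * l) + (IZR d - IZR a) * m - IZR b) ^ 2 + (l * (2 * m * IZR c + IZR d - IZR a)) ^ 2
  = IZR (f0z t e (c * t + d - a) (- (c * e + b))).
Proof.
  intros Ht He Hl m. unfold f0z.
  replace (l * l) with (l ^ 2) by ring.
  replace ((l * (2 * m * IZR c + IZR d - IZR a)) ^ 2) with (l ^ 2 * (2 * m * IZR c + IZR d - IZR a) ^ 2) by ring.
  rewrite Hl. assert (HQ : IZR Q = 4 * IZR e - IZR t) by (rewrite <- mult_IZR, <- minus_IZR; f_equal; lia).
  rewrite HQ. unfold m. zpush. destruct Ht as [-> | ->]; simpl; field.
Qed.

Lemma J_id t e Q a b c d l : (t = 0 \/ t = 1)%Z -> (4 * e = Q + t)%Z -> l ^ 2 = IZR Q / 4 ->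
  let m := IZR t / 2 in
  2 * l * ((m * IZR a + IZR b) * (m * IZR c + IZR d) + l ^ 2 * IZR a * IZR c
           - m * ((m * IZR c + IZR d) ^ 2 + l ^ 2 * IZR c ^ 2))
  = l * IZR (Bfz t e a b c d - t * f0z t e c d).
Proof.
  intros Ht He Hl m. unfold f0z, Bfz.
  rewrite Hl. assert (HQ : IZR Q = 4 * IZR e - IZR t) by (rewrite <- mult_IZR, <- minus_IZR; f_equal; lia).
  rewrite HQ. unfold m. zpush. destruct Ht as [-> | ->]; simpl; field.
Qed.

Lemma Kr_id t e Q c d l : (t = 0 \/ t = 1)%Z -> (4 * e = Q + t)%Z -> l ^ 2 = IZR Q / 4 ->
  let m := IZR t / 2 in
  (m * IZR c + IZR d) ^ 2 + l ^ 2 * IZR c ^ 2 = IZR (f0z t e c d).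
Proof.
  intros Ht He Hl m. unfold f0z.
  rewrite Hl. assert (HQ : IZR Q = 4 * IZR e - IZR t) by (rewrite <- mult_IZR, <- minus_IZR; f_equal; lia).
  rewrite HQ. unfold m. zpush. destruct Ht as [-> | ->]; simpl; field.
Qed.

Lemma RvalE q a b c d : In q qlist -> in_SL2Z a b c d ->
  Rval q a b c d = (IZR (Z.of_nat q) + 2 * IZR (Fw q a b c d)) / 2.
Proof.
  intros Hq Hs. destruct (qfacts q Hq) as (He & Ht & Hmu).
  unfold in_SL2Z in Hs.
  assert (Hd : IZR a * IZR d - IZR b * IZR c = 1) by (rewrite <- !mult_IZR, <- minus_IZR, Hs; reflexivity).
  unfold Rval, cosh_rho, mobius, zq.
  rewrite (gen (mu q) (lam q) (IZR a) (IZR b) (IZR c) (IZR d) (lam_pos q Hq) Hd).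
  rewrite Hmu. unfold Fw. rewrite <- (W_id (tZ q) (eZ q) (Z.of_nat q) a b c d (lam q) Ht He (lam2 q)).
  rewrite lam2. field.
Qed.

Lemma xgE q a b c d : In q qlist -> x_gamma q a b c d = lam q * IZR (jg q a b c d).
Proof.
  intros Hq. destruct (qfacts q Hq) as (He & Ht & Hmu).
  unfold x_gamma, jg. rewrite Hmu. apply (J_id _ _ (Z.of_nat q)); auto. apply lam2.
Qed.

Lemma ygE q n c d : In q qlist -> y_gamma q n c d = n - 2 * lam q ^ 2 * IZR (f0z (tZ q) (eZ q) c d).
Proof.
  intros Hq. destruct (qfacts q Hq) as (He & Ht & Hmu).
  unfold y_gamma. rewrite Hmu. rewrite (Kr_id (tZ q) (eZ q) (Z.of_nat q)); auto. apply lam2.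
Qed.

Open Scope R_scope.

Lemma ident4 t e Q a b c d : (t = 0 \/ t = 1)%Z -> (4 * e = Q + t)%Z ->
  (4 * f0z t e c d * f0z t e (c * t + d - a) (- (c * e + b))
   = (Bfz t e a b c d - t * f0z t e c d) ^ 2 + Q * (f0z t e c d - (a * d - b * c)) ^ 2)%Z.
Proof.
  intros [-> | ->] He; unfold f0z, Bfz; [replace Q with (4*e)%Z by lia | replace Q with (4*e-1)%Z by lia]; ring.
Qed.

Lemma f0_sq t e Q c d : (t = 0 \/ t = 1)%Z -> (4 * e = Q + t)%Z ->
  (4 * f0z t e c d = (2 * d + t * c) ^ 2 + Q * c ^ 2)%Z.
Proof.
  intros [-> | ->] He; unfold f0z; [replace Q with (4*e)%Z by lia | replace Q with (4*e-1)%Z by lia]; ring.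
Qed.

Lemma f0_nonneg t e Q c d : (t = 0 \/ t = 1)%Z -> (4 * e = Q + t)%Z -> (0 < Q)%Z -> (0 <= f0z t e c d)%Z.
Proof. intros Ht He HQ. pose proof (f0_sq t e Q c d Ht He). nia. Qed.

Lemma f0_pos t e Q a b c d : (t = 0 \/ t = 1)%Z -> (4 * e = Q + t)%Z -> (0 < Q)%Z ->
  (a * d - b * c = 1)%Z -> (0 < f0z t e c d)%Z.
Proof.
  intros Ht He HQ Hd. pose proof (f0_sq t e Q c d Ht He).
  destruct (Z.eq_dec c 0) as [->|Hc]; [|nia].
  assert (d <> 0)%Z by (intro; subst; lia). nia.
Qed.

Lemma LcalE q Nn n p : In q qlist -> n = IZR Nn / 2 ->
  Lcal q n p <-> exists j k : Z, p = (lam q * IZR j, n - 2 * lam q ^ 2 * IZR k) /\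
     (j * j + Z.of_nat q * k * k + Z.of_nat q = 2 * Nn * k)%Z.
Proof.
  intros Hq Hn. pose proof (lam_pos q Hq) as Hl. pose proof (lam2 q) as Hl2.
  pose proof (qpos q Hq) as HQ. set (Q := Z.of_nat q) in *.
  assert (HQr : 0 < IZR Q) by (apply IZR_lt; lia).
  destruct p as [x y]. unfold Lcal; cbn [fst snd]. split.
  - intros (H1 & [m Hm] & [j Hj]).
    exists j, (- m)%Z.
    assert (Hx : x = lam q * IZR j) by (rewrite <- Hj; field; lra).
    assert (Hy : y = n - 2 * lam q ^ 2 * IZR (- m)) by (rewrite opp_IZR, <- Hm; field; lra).
    split; [rewrite Hx, Hy; reflexivity|].
    rewrite Hx, Hy in H1.
    assert (E : lam q ^ 2 * (IZR j ^ 2 - 4 * n * IZR (- m) + 4 * lam q ^ 2 * IZR (- m) ^ 2 + 4 * lam q ^ 2) = 0).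
    { apply Rminus_diag_eq in H1. rewrite <- H1. ring. }
    apply Rmult_integral in E. destruct E as [E|E].
    { exfalso. pose proof (pow2_gt_0 (lam q)). lra. }
    rewrite Hl2, Hn in E.
    assert (HH : IZR (j * j + Q * - m * - m + Q) = IZR (2 * Nn * - m)).
    { zpush. rewrite opp_IZR in E. apply Rminus_diag_uniq. rewrite <- E. field. }
    apply eq_IZR in HH. exact HH.
  - intros (j & k & Hp & Hjk). injection Hp as -> ->. split; [|split].
    + replace (lam q ^ 4) with ((lam q ^ 2) ^ 2) by ring.
      replace ((lam q * IZR j) ^ 2) with (lam q ^ 2 * IZR j ^ 2) by ring.
      change (lam q * (lam q * 1)) with (lam q ^ 2). rewrite Hl2, Hn. apply (f_equal IZR) in Hjk.
      apply Rminus_diag_uniq.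
      transitivity (IZR Q / 4 * (IZR (j * j + Q * k * k + Q) - IZR (2 * Nn * k))).
      { zpush. field. }
      rewrite Hjk. ring.
    + exists (- k)%Z. rewrite opp_IZR. field. lra.
    + exists j. field. lra.
Qed.

Open Scope Z_scope.

Definition rep t e A B := exists a b c d, a * d - b * c = 1 /\ f0z t e c d = A /\ Bfz t e a b c d = B.

Lemma ident t e Q a b c d : (t = 0 \/ t = 1) -> 4 * e = Q + t ->
  4 * f0z t e c d * f0z t e a b - Bfz t e a b c d ^ 2 = Q * (a*d - b*c) ^ 2.
Proof. intros [-> | ->] He; unfold f0z, Bfz; [replace Q with (4*e) by lia | replace Q with (4*e-1) by lia]; ring. Qed.

Lemma rep_trans t e A B s : rep t e A B -> rep t e A (B + 2 * A * s).
Proof.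
  intros (a & b & c & d & H1 & H2 & H3). exists (a + s * c), (b + s * d), c, d.
  split; [lia|]. split; auto. rewrite <- H2, <- H3. unfold f0z, Bfz. ring.
Qed.

Lemma rep_swap t e Q A B C : (t = 0 \/ t = 1) -> 4 * e = Q + t -> 0 < C -> B*B + Q = 4*A*C ->
  rep t e C (-B) -> rep t e A B.
Proof.
  intros Ht He HC HB (a & b & c & d & H1 & H2 & H3).
  exists (-c), (-d), a, b. split; [lia|]. split.
  - pose proof (ident t e Q a b c d Ht He) as Hi. rewrite H1, H2, H3 in Hi.
    nia.
  - rewrite <- (Z.opp_involutive B), <- H3. unfold Bfz. ring.
Qed.

Lemma reduction t e Q : (t = 0 \/ t = 1) -> 4 * e = Q + t -> 0 < Q ->
  (forall A B C, 1 < A -> -A <= B < A -> A <= C -> B*B + Q = 4*A*C -> False) ->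
  forall A B C, 0 < A -> B*B + Q = 4*A*C -> rep t e A B.
Proof.
  intros Ht He HQ Hno.
  assert (forall N A B C, (Z.to_nat A <= N)%nat -> 0 < A -> B*B + Q = 4*A*C -> rep t e A B) as H.
  2:{ intros A B C. apply (H (Z.to_nat A)). lia. }
  induction N as [|N IH]; intros A B C HN HA HB; [lia|].
  set (s := - ((B + A) / (2 * A))).
  set (B' := B + 2 * A * s). set (C' := C + B * s + A * s * s).
  assert (HB' : B' * B' + Q = 4 * A * C') by (unfold B', C'; nia).
  assert (Hr : -A <= B' < A).
  { unfold B', s. pose proof (Z.div_mod (B + A) (2*A)) as Hd. pose proof (Z.mod_pos_bound (B + A) (2*A)).
    lia. }
  assert (rep t e A B') as HR.
  { destruct (Z_lt_ge_dec C' A) as [Hlt|Hge].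
    - assert (0 < C') by nia.
      apply (rep_swap t e Q A B' C'); auto.
      apply (IH C' (-B') A); [lia| lia| nia].
    - destruct (Z.eq_dec A 1) as [->|HA1].
      + assert (B' = -1 \/ B' = 0) as [Hb|Hb] by lia.
        * exists 1, (-1), 0, 1. unfold f0z, Bfz. rewrite Hb in HB'. split; [lia|]. split; [lia|].
          destruct Ht as [-> | ->]; lia.
        * exists 1, 0, 0, 1. unfold f0z, Bfz. rewrite Hb in HB'. split; [lia|]. split; [lia|].
          destruct Ht as [-> | ->]; lia.
      + exfalso. apply (Hno A B' C'); auto; lia. }
  replace B with (B' + 2 * A * (-s)) by (unfold B'; ring).
  apply rep_trans; auto.
Qed.

Lemma nored q : In q qlist -> forall A B C, 1 < A -> -A <= B < A -> A <= C ->
  B*B + Z.of_nat q = 4*A*C -> False.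
Proof.
  intros Hq A B C H1 H2 H3 H4.
  assert (Hq' : Z.of_nat q <= 163).
  { unfold qlist in Hq; simpl in Hq. repeat (destruct Hq as [<-|Hq]; [simpl; lia|]). destruct Hq. }
  assert (3 * (A * A) <= Z.of_nat q) by nia.
  assert (A <= 7) by nia.
  assert (A = 2 \/ A = 3 \/ A = 4 \/ A = 5 \/ A = 6 \/ A = 7) as HA by lia.
  assert (B = -7 \/ B = -6 \/ B = -5 \/ B = -4 \/ B = -3 \/ B = -2 \/ B = -1 \/ B = 0 \/ B = 1 \/ B = 2 \/ B = 3 \/ B = 4 \/ B = 5 \/ B = 6) as HB by lia.
  assert (HQ : Z.of_nat q = 3 \/ Z.of_nat q = 4 \/ Z.of_nat q = 7 \/ Z.of_nat q = 8 \/ Z.of_nat q = 11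
     \/ Z.of_nat q = 19 \/ Z.of_nat q = 43 \/ Z.of_nat q = 67 \/ Z.of_nat q = 163).
  { unfold qlist in Hq; simpl in Hq. repeat (destruct Hq as [<-|Hq]; [simpl; lia|]). destruct Hq. }
  clear Hq. remember (Z.of_nat q) as Q. clear HeqQ.
  repeat match goal with H : _ \/ _ |- _ => destruct H as [H|H] end; subst; lia.
Qed.

Open Scope R_scope.

Lemma n_form q n : In q qlist -> in_Nzq q n ->
  exists F, (0 <= F)%Z /\ n = IZR (Z.of_nat q + 2 * F) / 2.
Proof.
  intros Hq (a & b & c & d & Hs & Hr). destruct (qfacts q Hq) as (He & Ht & _).
  exists (Fw q a b c d). split.
  - unfold Fw. apply (f0_nonneg _ _ (Z.of_nat q)); auto. apply qpos; auto.
  - rewrite <- Hr, RvalE by auto. zpush. reflexivity.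
Qed.

Lemma oddQ q : In q qlist -> tZ q = 1%Z -> Z.odd (Z.of_nat q) = true.
Proof. unfold qlist, tZ; simpl; intros H. repeat (destruct H as [<-|H]; [simpl; intros; try discriminate; reflexivity|]). destruct H. Qed.

Lemma par_jk j k Q N : Z.odd Q = true -> (j*j + Q*k*k + Q = 2*N*k)%Z -> exists h, (j + k = 2*h+1)%Z.
Proof.
  intros HQ H. apply (f_equal Z.odd) in H.
  rewrite !Z.odd_add, !Z.odd_mul, HQ in H.
  assert (Z.odd (j + k) = true) as Ho.
  { rewrite Z.odd_add. destruct (Z.odd j), (Z.odd k); simpl in *; auto. }
  apply Z.odd_spec in Ho. destruct Ho as [h Hh]. exists h. lia.
Qed.

Lemma Lset_iff q n p : In q qlist -> in_Nzq q n -> (L_set q n p <-> Lcal q n p).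
Proof.
  intros Hq Hn. destruct (n_form q n Hq Hn) as (F & HF & Hnf).
  destruct (qfacts q Hq) as (He & Ht & Hmu). pose proof (qpos q Hq) as HQ.
  set (Q := Z.of_nat q) in *. set (t := tZ q) in *. set (e := eZ q) in *.
  rewrite (LcalE q (Q + 2 * F) n p Hq Hnf). split.
  - intros (a & b & c & d & Hs & Hr & Hx & Hy).
    exists (jg q a b c d), (f0z t e c d). split.
    + destruct p; simpl in *. rewrite Hx, Hy, xgE, ygE by auto. reflexivity.
    + rewrite RvalE in Hr by auto. rewrite Hnf in Hr.
      assert (HF2 : F = Fw q a b c d).
      { assert (H : IZR (Q + 2 * Fw q a b c d) = IZR (Q + 2 * F)).
        { change (Z.of_nat q) with Q in Hr. rewrite !plus_IZR, !mult_IZR. rewrite !plus_IZR, !mult_IZR in Hr. lra. }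
        apply eq_IZR in H. lia. }
      pose proof (ident4 t e Q a b c d Ht He) as Hi. unfold in_SL2Z in Hs. rewrite Hs in Hi.
      change (f0z t e (c * t + d - a) (-(c*e+b))) with (Fw q a b c d) in Hi.
      change (Bfz t e a b c d - t * f0z t e c d)%Z with (jg q a b c d) in Hi.
      rewrite <- HF2 in Hi. generalize dependent (jg q a b c d). generalize dependent (f0z t e c d).
      intros K J Hi. nia.
  - intros (j & k & Hp & Hjk). change (Z.of_nat q) with Q in Hjk.
    assert (Hk : (0 < k)%Z) by nia.
    assert (HC : exists C, ((j + t * k) * (j + t * k) + Q = 4 * k * C)%Z).
    { destruct Ht as [Ht0|Ht1].
      - rewrite Ht0. exists (2 * e + F - e * k)%Z. nia.
      - rewrite Ht1. destruct (par_jk j k Q (Q + 2 * F)%Z (oddQ q Hq Ht1) Hjk) as [h Hh].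
        exists (2 * e + F + h - e * k)%Z. nia. }
    destruct HC as [C HC].
    destruct (reduction t e Q Ht He HQ (nored q Hq) k (j + t * k)%Z C Hk HC)
      as (a & b & c & d & Hs & Hf & HB).
    exists a, b, c, d. 
    assert (Hj : jg q a b c d = j) by (unfold jg; fold t e; rewrite Hf, HB; ring).
    split; [exact Hs|]. split; [|split].
    + rewrite RvalE by auto. rewrite Hnf.
      pose proof (ident4 t e Q a b c d Ht He) as Hi. rewrite Hs in Hi.
      change (f0z t e (c * t + d - a) (-(c*e+b))) with (Fw q a b c d) in Hi.
      change (Bfz t e a b c d - t * f0z t e c d)%Z with (jg q a b c d) in Hi.
      rewrite Hj, Hf in Hi.
      assert (Fw q a b c d = F) as ->.
      { generalize dependent (Fw q a b c d). intros W Hi.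
        assert (HH : (k * (W - F) = 0)%Z) by nia.
        apply Z.mul_eq_0 in HH. lia. }
      change (Z.of_nat q) with Q. rewrite plus_IZR, mult_IZR. reflexivity.
    + rewrite Hp, xgE, Hj by auto. reflexivity.
    + rewrite Hp, ygE by auto. fold t e. rewrite Hf. reflexivity.
Qed.

Open Scope Z_scope.

Lemma NoDup_map_on {A B} (f : A -> B) (l : list A) :
  NoDup l -> (forall x y, In x l -> In y l -> f x = f y -> x = y) -> NoDup (map f l).
Proof.
  induction l as [|a l IH]; intros Hnd Hinj; simpl; constructor.
  - intros Hin. apply in_map_iff in Hin. destruct Hin as (y & Hy & Hyl).
    inversion Hnd; subst. assert (y = a) by (apply Hinj; simpl; auto). subst. contradiction.
  - inversion Hnd; subst. apply IH; auto. intros; apply Hinj; simpl; auto.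
Qed.

Lemma len_eq {A} (l l' : list A) : NoDup l -> NoDup l' -> (forall x, In x l <-> In x l') ->
  length l = length l'.
Proof.
  intros H1 H2 H. apply Nat.le_antisymm; apply NoDup_incl_length; auto; intros x; apply H.
Qed.

Lemma filter_len_split {A} (f : A -> bool) l :
  length l = (length (filter f l) + length (filter (fun x => negb (f x)) l))%nat.
Proof. induction l as [|a l IH]; simpl; auto. destruct (f a); simpl; lia. Qed.

Lemma filter_all {A} (f : A -> bool) l : (forall x, In x l -> f x = true) -> filter f l = l.
Proof. induction l as [|a l IH]; simpl; intros H; auto. rewrite H by auto. f_equal. apply IH; auto. Qed.

Definition zr (W : Z) : list Z := map (fun i => Z.of_nat i - W) (seq 0 (Z.to_nat (2 * W + 1))).
Lemma in_zr W x : -W <= x <= W -> In x (zr W).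
Proof.
  intros H. unfold zr. apply in_map_iff. exists (Z.to_nat (x + W)). split; [lia|].
  apply in_seq. lia.
Qed.

Definition pair_dec : forall x y : Z * Z, {x = y} + {x <> y}.
Proof. decide equality; apply Z.eq_dec. Defined.

Lemma half_count {A} (c : A -> bool) (s : A -> A) (P : A -> Prop) (l : list A) :
  NoDup l -> (forall x, In x l <-> P x) ->
  (forall x, P x -> P (s x) /\ s (s x) = x /\ c (s x) = negb (c x)) ->
  length l = (2 * length (filter c l))%nat.
Proof.
  intros Hnd Hl Hs. rewrite (filter_len_split c l).
  assert (length (filter (fun x => negb (c x)) l) = length (map s (filter c l))) as ->.
  { apply len_eq.
    - apply NoDup_filter; auto.
    - apply NoDup_map_on; [apply NoDup_filter; auto|].
      intros x y Hx Hy Hxy. apply filter_In in Hx, Hy.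
      rewrite <- (proj1 (proj2 (Hs x (proj1 (Hl x) (proj1 Hx))))).
      rewrite <- (proj1 (proj2 (Hs y (proj1 (Hl y) (proj1 Hy))))). congruence.
    - intros x. rewrite filter_In, in_map_iff. split.
      + intros [Hx Hc]. apply Hl in Hx. destruct (Hs x Hx) as (H1 & H2 & H3).
        exists (s x). split; auto. apply filter_In. split; [apply Hl; tauto|].
        rewrite H3. destruct (c x); simpl in *; auto.
      + intros (y & <- & Hy). apply filter_In in Hy. destruct Hy as [Hy Hc].
        apply Hl in Hy. destruct (Hs y Hy) as (H1 & H2 & H3). split; [apply Hl; auto|].
        rewrite H3, Hc. reflexivity. }
  rewrite length_map. lia.
Qed.

Open Scope Z_scope.

Definition condz (t Q Nn : Z) (x : Z * Z) : bool := Z.eqb ((2 * fst x + t * snd x + Nn) mod Q) 0.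

Lemma condz_iff t Q Nn x : Q <> 0 -> (condz t Q Nn x = true <-> (Q | 2 * fst x + t * snd x + Nn)).
Proof. intros HQ. unfold condz. rewrite Z.eqb_eq. apply Z.mod_divide; auto. Qed.

Lemma bool_xor (P1 P2 : Prop) b1 b2 : (b1 = true <-> P1) -> (b2 = true <-> P2) ->
  (P1 \/ P2) -> ~ (P1 /\ P2) -> b2 = negb b1.
Proof. destruct b1, b2; simpl; intuition; try discriminate; exfalso; intuition. Qed.

Lemma odd_full Q e Nn M a b : prime Q -> 4 * e = Q + 1 -> 4 * M = Nn * Nn - Q * Q -> (Q | Nn) ->
  f0z 1 e b a = M -> (Q | 2 * a + 1 * b + Nn).
Proof.
  intros Hp He HM [k Hk] Hf.
  pose proof (f0_sq 1 e Q b a (or_intror eq_refl) He) as Hs.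
  assert (Hd : (Q | (2 * a + 1 * b) * (2 * a + 1 * b))).
  { exists (k * k * Q - Q - b * b). nia. }
  apply prime_mult in Hd; auto. apply Z.divide_add_r; [destruct Hd; auto| exists k; auto].
Qed.

Lemma odd_half Q e Nn M a b : prime Q -> 4 * e = Q + 1 -> 4 * M = Nn * Nn - Q * Q -> ~ (Q | Nn) ->
  f0z 1 e b a = M -> ((Q | 2 * a + 1 * b + Nn) \/ (Q | 2 * (- a - b) + 1 * b + Nn))
   /\ ~ ((Q | 2 * a + 1 * b + Nn) /\ (Q | 2 * (- a - b) + 1 * b + Nn)).
Proof.
  intros Hp He HM HN Hf.
  pose proof (f0_sq 1 e Q b a (or_intror eq_refl) He) as Hs.
  assert (HQ : 2 <= Q) by (destruct Hp; lia).
  split.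
  - apply prime_mult; auto. exists (Q + b * b). nia.
  - intros [H1 H2]. assert (H3 : (Q | 2 * Nn)).
    { replace (2 * Nn) with ((2 * a + 1 * b + Nn) + (2 * (- a - b) + 1 * b + Nn)) by ring.
      apply Z.divide_add_r; auto. }
    apply prime_mult in H3; auto. destruct H3 as [H3|H3]; auto.
    apply Z.divide_pos_le in H3; [|lia]. destruct Hp. lia.
Qed.

Lemma par_split x : exists y, x = 2*y \/ x = 2*y+1.
Proof. exists (x / 2). pose proof (Z.div_mod x 2). pose proof (Z.mod_pos_bound x 2). lia. Qed.

Lemma four_full F a b : (exists g, F = 2 * g) -> f0z 0 1 b a = F * (4 + F) ->
  (4 | 2 * a + 0 * b + (4 + 2 * F)).
Proof.
  unfold f0z. intros [g ->] H.
  destruct (par_split a) as [a1 [-> | ->]]; destruct (par_split b) as [b1 [-> | ->]].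
  all: try (exists (a1 + 1 + g); lia). all: exfalso; lia.
Qed.

Lemma four_half F a b : ~ (exists g, F = 2 * g) -> f0z 0 1 b a = F * (4 + F) ->
  ((4 | 2 * a + 0 * b + (4 + 2 * F)) \/ (4 | 2 * b + 0 * a + (4 + 2 * F)))
  /\ ~ ((4 | 2 * a + 0 * b + (4 + 2 * F)) /\ (4 | 2 * b + 0 * a + (4 + 2 * F))).
Proof.
  unfold f0z. intros HF H. destruct (par_split F) as [g [-> | ->]]; [exfalso; eauto|].
  destruct (par_split a) as [a1 [-> | ->]]; destruct (par_split b) as [b1 [-> | ->]].
  all: try (exfalso; lia).
  - split; [right; exists (b1 + g + 2); lia|]. intros [[k Hk] _]. lia.
  - split; [left; exists (a1 + g + 2); lia|]. intros [_ [k Hk]]. lia.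
Qed.

Lemma eight_full F a b : (exists g, F = 2 * g) -> f0z 0 2 b a = F * (8 + F) ->
  (8 | 2 * a + 0 * b + (8 + 2 * F)).
Proof.
  unfold f0z. intros [g ->] H.
  destruct (par_split a) as [a1 [-> | ->]]; [|exfalso; lia].
  destruct (par_split b) as [b1 [-> | ->]]; [|exfalso; lia].
  destruct (par_split a1) as [a2 [-> | ->]]; destruct (par_split g) as [g1 [-> | ->]].
  all: try (exfalso; lia).
  - exists (a2 + g1 + 1). lia.
  - exists (a2 + g1 + 2). lia.
Qed.

Lemma eight_half F a b : ~ (exists g, F = 2 * g) -> f0z 0 2 b a = F * (8 + F) ->
  ((8 | 2 * a + 0 * b + (8 + 2 * F)) \/ (8 | 2 * (- a) + 0 * b + (8 + 2 * F)))
  /\ ~ ((8 | 2 * a + 0 * b + (8 + 2 * F)) /\ (8 | 2 * (- a) + 0 * b + (8 + 2 * F))).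
Proof.
  unfold f0z. intros HF H. destruct (par_split F) as [g [-> | ->]]; [exfalso; eauto|].
  destruct (par_split a) as [a1 [-> | ->]]; [exfalso; lia|].
  destruct (par_split a1) as [a2 [-> | ->]]; destruct (par_split g) as [g1 [-> | ->]].
  - split; [right; exists (- a2 + g1 + 1); lia|]. intros [[k Hk] _]. lia.
  - split; [left; exists (a2 + g1 + 2); lia|]. intros [_ [k Hk]]. lia.
  - split; [left; exists (a2 + g1 + 2); lia|]. intros [_ [k Hk]]. lia.
  - split; [right; exists (- a2 + g1 + 1); lia|]. intros [[k Hk] _]. lia.
Qed.

Open Scope Z_scope.


Lemma HM_ (Q F : Z) : 4 * (F * (Q + F)) = (Q + 2 * F) * (Q + 2 * F) - Q * Q.
Proof. ring. Qed.

Lemma bound_S2 (t e Q F : Z) (Ht : t = 0 \/ t = 1) (He : 4 * e = Q + t) (HQ : 0 < Q) (HF : 0 <= F) a b :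
  f0z t e b a = F * (Q + F) -> -(4 * (F * (Q + F)) + 1) <= a <= 4 * (F * (Q + F)) + 1 /\ -(4 * (F * (Q + F)) + 1) <= b <= 4 * (F * (Q + F)) + 1.
Proof.
  set (M := F * (Q + F)).
  intros H. pose proof (f0_sq t e Q b a Ht He) as Hs. rewrite H in Hs.
  set (u := 2 * a + t * b) in *.
  assert (HM0 : 0 <= M) by (unfold M; nia).
  assert (H1 : b * b <= 4 * M) by nia.
  assert (H2 : u * u <= 4 * M) by nia.
  assert (H3 : -(b * b) <= b <= b * b) by nia.
  assert (H4 : -(u * u) <= u <= u * u) by nia.
  assert (H5 : -b <= t * b <= b \/ b <= t * b <= -b) by (destruct Ht as [-> | ->]; lia).
  unfold u in *. lia.
Qed.

Lemma psi_S1 (t e Q F : Z) (Ht : t = 0 \/ t = 1) (He : 4 * e = Q + t) (HQ : 0 < Q) a b :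
  f0z t e b a = F * (Q + F) -> (Q | 2 * a + t * b + (Q + 2 * F)) ->
  let k := (2 * a + t * b + (Q + 2 * F)) / Q in b * b + Q * k * k + Q = 2 * (Q + 2 * F) * k.
Proof.
  set (Nn := Q + 2 * F). set (M := F * (Q + F)).
  intros H Hd k. pose proof (f0_sq t e Q b a Ht He) as Hs. rewrite H in Hs.
  pose proof (HM_ Q F) as HM. fold Nn M in HM.
  assert (Hk : 2 * a + t * b + Nn = Q * k).
  { unfold k. destruct Hd as [z Hz]. rewrite Hz, Z.div_mul by lia. ring. }
  apply (Z.mul_reg_l _ _ Q); [lia|]. nia.
Qed.

Lemma S1_pre (t e Q F : Z) (Ht : t = 0 \/ t = 1) (He : 4 * e = Q + t) (HQ : 0 < Q) j k :
  j * j + Q * k * k + Q = 2 * (Q + 2 * F) * k ->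
  exists a, f0z t e j a = F * (Q + F) /\ (Q | 2 * a + t * j + (Q + 2 * F)) /\ (2 * a + t * j + (Q + 2 * F)) / Q = k.
Proof.
  set (Nn := Q + 2 * F). set (M := F * (Q + F)).
  intros Hjk. pose proof (HM_ Q F) as HM. fold Nn M in HM.
  assert (Ha : exists a, 2 * a + t * j = Q * k - Nn).
  { destruct Ht as [Ht0|Ht1].
    - exists (e * 2 * k - 2 * e - F). unfold Nn. rewrite Ht0 in *. lia.
    - assert (Z.odd Q = true) as HQo.
      { rewrite Ht1 in He. replace Q with (1 + 2 * (2 * e - 1)) by lia. rewrite Z.odd_add_mul_2. reflexivity. }
      destruct (par_jk j k Q Nn HQo Hjk) as [h Hh].
      exists (2 * e * k - 2 * e - F - h). unfold Nn. rewrite Ht1 in *. lia. }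
  destruct Ha as [a Ha]. exists a. split; [|split].
  - pose proof (f0_sq t e Q j a Ht He) as Hs. rewrite Ha in Hs. nia.
  - exists k. lia.
  - replace (2 * a + t * j + Nn) with (k * Q) by lia. apply Z.div_mul. lia.
Qed.

Lemma psi_inj (t Q F : Z) (HQ : 0 < Q) a b a' b' : (Q | 2 * a + t * b + (Q + 2 * F)) -> (Q | 2 * a' + t * b' + (Q + 2 * F)) -> b = b' ->
  (2 * a + t * b + (Q + 2 * F)) / Q = (2 * a' + t * b' + (Q + 2 * F)) / Q -> a = a'.
Proof.
  intros [z Hz] [z' Hz'] <- Hq. rewrite Hz, Hz', !Z.div_mul in Hq by lia. subst. lia.
Qed.


Open Scope Z_scope.

Lemma prime_check p : 1 < p ->
  forallb (fun i => negb (p mod (Z.of_nat i + 2) =? 0)) (seq 0 (Z.to_nat p - 2)) = true -> prime p.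
Proof.
  intros H1 H2. apply prime_alt. split; auto.
  intros n Hn Hd. rewrite forallb_forall in H2.
  specialize (H2 (Z.to_nat (n - 2))).
  assert (In (Z.to_nat (n-2)) (seq 0 (Z.to_nat p - 2))) as Hin.
  { apply in_seq. lia. }
  specialize (H2 Hin). rewrite Z2Nat.id in H2 by lia.
  replace (n - 2 + 2) with n in H2 by lia.
  apply Z.mod_divide in Hd; [|lia]. rewrite Hd in H2. discriminate.
Qed.

Lemma divR_iff m x : divR m (IZR x) <-> (m | x).
Proof.
  unfold divR. split.
  - intros [k Hk]. exists k. apply eq_IZR. rewrite mult_IZR. exact Hk.
  - intros [k Hk]. exists k. rewrite Hk, mult_IZR. reflexivity.
Qed.

Definition Pdich (q : nat) (F : Z) : Prop :=
  let t := tZ q in let e := eZ q in let Q := Z.of_nat q in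
  let Nn := Q + 2 * F in let M := F * (Q + F) in
  (cn_cond q (IZR Nn / 2) /\ forall x, f0z t e (snd x) (fst x) = M -> condz t Q Nn x = true)
  \/ (~ cn_cond q (IZR Nn / 2) /\ exists s : Z * Z -> Z * Z, forall x, f0z t e (snd x) (fst x) = M ->
        f0z t e (snd (s x)) (fst (s x)) = M /\ s (s x) = x /\ condz t Q Nn (s x) = negb (condz t Q Nn x)).

Lemma dich_odd q F : ~ Nat.Even q -> tZ q = 1 -> 4 * eZ q = Z.of_nat q + 1 -> prime (Z.of_nat q) ->
  0 <= F -> Pdich q F.
Proof.
  intros Hev Ht He Hp HF. unfold Pdich. rewrite Ht.
  set (Q := Z.of_nat q) in *. set (e := eZ q) in *.
  assert (HQ : 2 <= Q) by (destruct Hp; lia).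
  assert (Hcn : cn_cond q (IZR (Q + 2 * F) / 2) <-> (Q | Q + 2 * F)).
  { unfold cn_cond. replace (2 * (IZR (Q + 2 * F) / 2))%R with (IZR (Q + 2 * F)) by field.
    rewrite divR_iff. fold Q. tauto. }
  assert (HM : 4 * (F * (Q + F)) = (Q + 2 * F) * (Q + 2 * F) - Q * Q) by ring.
  destruct (Znumtheory.Zdivide_dec Q (Q + 2 * F)) as [Hd|Hd].
  - left. split; [apply Hcn; auto|]. intros [a b] Hf. apply condz_iff; [lia|]. simpl.
    eapply odd_full; eauto.
  - right. split; [rewrite Hcn; auto|]. exists (fun x => (- fst x - snd x, snd x)).
    intros [a b] Hf. simpl in *. split; [|split].
    + rewrite <- Hf. unfold f0z. ring.
    + f_equal. ring.
    + destruct (odd_half Q e (Q + 2 * F) _ a b Hp He HM Hd Hf) as [H1 H2].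
      eapply bool_xor; [apply condz_iff; lia | apply condz_iff; lia | auto | auto].
Qed.

Lemma divR2_iff x : divR 2 (IZR x / 2) <-> (4 | x).
Proof.
  unfold divR. split.
  - intros [k Hk]. exists k. apply eq_IZR. rewrite mult_IZR. lra.
  - intros [k Hk]. exists k. rewrite Hk, mult_IZR. lra.
Qed.

Lemma Even4 : Nat.Even 4. Proof. exists 2%nat. reflexivity. Qed.
Lemma Even8 : Nat.Even 8. Proof. exists 4%nat. reflexivity. Qed.

Lemma cn_even q F : Nat.Even q -> (cn_cond q (IZR (Z.of_nat q + 2 * F) / 2) <-> (4 | Z.of_nat q + 2 * F)).
Proof. intros Hev. unfold cn_cond. rewrite divR2_iff. tauto. Qed.

Lemma dich4 F : 0 <= F -> Pdich 4 F.
Proof.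
  intros HF. unfold Pdich. change (tZ 4) with 0. change (eZ 4) with 1. change (Z.of_nat 4) with 4.
  rewrite (cn_even 4 F Even4). change (Z.of_nat 4) with 4.
  assert (Hg : (4 | 4 + 2 * F) <-> exists g, F = 2 * g).
  { split; intros [g Hg]; [exists (g - 1)|exists (g + 1)]; lia. }
  rewrite Hg. destruct (par_split F) as [g [Hg' | Hg']].
  - left. split; [eauto|]. intros [a b] Hf. apply condz_iff; [lia|]. cbn [fst snd].
    apply four_full; eauto.
  - right. split. { intros [g2 Hg2]. lia. }
    exists (fun x => (snd x, fst x)). intros [a b] Hf. cbn [fst snd] in *. split; [|split].
    + rewrite <- Hf. unfold f0z. ring.
    + reflexivity.
    + destruct (four_half F a b) as [H1 H2]; auto. { intros [g2 Hg2]. lia. }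
      eapply bool_xor; [apply condz_iff; lia | apply condz_iff; lia | auto | auto].
Qed.

Lemma dich8 F : 0 <= F -> Pdich 8 F.
Proof.
  intros HF. unfold Pdich. change (tZ 8) with 0. change (eZ 8) with 2. change (Z.of_nat 8) with 8.
  rewrite (cn_even 8 F Even8). change (Z.of_nat 8) with 8.
  assert (Hg : (4 | 8 + 2 * F) <-> exists g, F = 2 * g).
  { split; intros [g Hg]; [exists (g - 2)|exists (g + 2)]; lia. }
  rewrite Hg. destruct (par_split F) as [g [Hg' | Hg']].
  - left. split; [eauto|]. intros [a b] Hf. apply condz_iff; [lia|]. cbn [fst snd].
    apply eight_full; eauto.
  - right. split. { intros [g2 Hg2]. lia. }
    exists (fun x => (- fst x, snd x)). intros [a b] Hf. cbn [fst snd] in *. split; [|split].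
    + rewrite <- Hf. unfold f0z. ring.
    + f_equal. ring.
    + destruct (eight_half F a b) as [H1 H2]; auto. { intros [g2 Hg2]. lia. }
      eapply bool_xor; [apply condz_iff; lia | apply condz_iff; lia | auto | auto].
Qed.

Lemma notEven q : (exists m, q = 2 * m + 1)%nat -> ~ Nat.Even q.
Proof. intros [m Hm] [k Hk]. lia. Qed.

Ltac odd_case m := apply dich_odd; [apply notEven; exists m; reflexivity | reflexivity | reflexivity
  | apply prime_check; [simpl; lia | vm_compute; reflexivity] | assumption].

Lemma dich q F : In q qlist -> 0 <= F -> Pdich q F.
Proof.
  intros Hq HF. unfold qlist in Hq; simpl in Hq.
  destruct Hq as [<-|[<-|[<-|[<-|[<-|[<-|[<-|[<-|[<-|[]]]]]]]]]].
  - odd_case 1%nat.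
  - apply dich4; auto.
  - odd_case 3%nat.
  - apply dich8; auto.
  - odd_case 5%nat.
  - odd_case 9%nat.
  - odd_case 21%nat.
  - odd_case 33%nat.
  - odd_case 81%nat.
Qed.

Open Scope R_scope.

Lemma normK_E q ab : In q qlist -> normK q ab = IZR (f0z (tZ q) (eZ q) (snd ab) (fst ab)).
Proof.
  intros Hq. destruct (qfacts q Hq) as (He & Ht & Hmu).
  rewrite <- (Kr_id (tZ q) (eZ q) (Z.of_nat q) (snd ab) (fst ab) (lam q) Ht He (lam2 q)).
  unfold normK, Cmod, zq. rewrite pow2_sqrt by (apply Rplus_le_le_0_compat; apply pow2_ge_0).
  rewrite Hmu. simpl. ring.
Qed.

Lemma Mval q F : IZR (Z.of_nat q + 2 * F) / 2 * (IZR (Z.of_nat q + 2 * F) / 2) - 4 * (lam q ^ 2 * lam q ^ 2)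
   = IZR (F * (Z.of_nat q + F)).
Proof. rewrite lam2. zpush. field. Qed.

Theorem proposition2p6 (q : nat) (Hq : In q qlist) (n : R) (Hn : in_Nzq q n) :
  (forall p : R * R, L_set q n p <-> Lcal q n p) /\
  exists (l1 : list (R * R)) (l2 : list (Z * Z)),
    NoDup l1 /\ (forall p, In p l1 <-> Lcal q n p) /\
    NoDup l2 /\ (forall ab, In ab l2 <-> normK q ab = n ^ 2 - 4 * lam q ^ 4) /\
    INR (length l1) = 2 * c_n q n * INR (length l2).
Proof.
  destruct (qfacts q Hq) as (He & Ht & Hmu). pose proof (qpos q Hq) as HQ.
  destruct (n_form q n Hq Hn) as (F & HF & Hnf).
  split. { intros p; apply Lset_iff; auto. }
  pose proof (dich q F Hq HF) as Hdich.
  pose proof (lam_pos q Hq) as Hl.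
  assert (HnM : n ^ 2 - 4 * lam q ^ 4 = IZR (F * (Z.of_nat q + F))).
  { rewrite <- Mval, Hnf. ring. }
  set (Q := Z.of_nat q) in *. set (t := tZ q) in *. set (e := eZ q) in *.
  set (Nn := (Q + 2 * F)%Z) in *. set (M := (F * (Q + F))%Z) in *.
  set (W := (4 * M + 1)%Z).
  set (l2 := nodup pair_dec (filter (fun x => Z.eqb (f0z t e (snd x) (fst x)) M) (list_prod (zr W) (zr W)))).
  assert (Hl2 : forall x, In x l2 <-> f0z t e (snd x) (fst x) = M).
  { intros [a b]. unfold l2. rewrite nodup_In, filter_In, in_prod_iff, Z.eqb_eq. cbn [fst snd].
    split; [tauto|]. intros H.
    destruct (bound_S2 t e Q F Ht He HQ HF a b H). split; [split; apply in_zr; lia | auto]. }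
  set (psi := fun x : Z * Z => (snd x, ((2 * fst x + t * snd x + Nn) / Q)%Z)).
  set (Fm := fun y : Z * Z => (lam q * IZR (fst y), n - 2 * lam q ^ 2 * IZR (snd y))).
  set (lc := filter (condz t Q Nn) l2).
  assert (Hlc : forall x, In x lc <-> f0z t e (snd x) (fst x) = M /\ (Q | 2 * fst x + t * snd x + Nn)%Z).
  { intros x; unfold lc; rewrite filter_In, Hl2, condz_iff by lia; tauto. }
  exists (map (fun x => Fm (psi x)) lc), l2.
  split; [|split; [|split; [|split]]].
  - apply NoDup_map_on; [apply NoDup_filter, NoDup_nodup|].
    intros [a b] [a' b'] Hx Hy Heq. apply Hlc in Hx, Hy. cbn [fst snd] in *.
    pose proof (f_equal fst Heq) as H1. pose proof (f_equal snd Heq) as H2.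
    unfold Fm, psi in H1, H2; cbn [fst snd] in H1, H2.
    apply Rmult_eq_reg_l in H1; [|lra]. apply eq_IZR in H1.
    assert (H3 : IZR ((2 * a + t * b + Nn) / Q) = IZR ((2 * a' + t * b' + Nn) / Q)).
    { apply (Rmult_eq_reg_l (2 * lam q ^ 2)); [|pose proof (pow2_gt_0 (lam q)); lra]. lra. }
    apply eq_IZR in H3. subst b'. f_equal.
    apply (psi_inj t Q F HQ a b a' b); tauto.
  - intros p. rewrite (LcalE q Nn n p Hq Hnf), in_map_iff. split.
    + intros ([a b] & <- & Hx). apply Hlc in Hx. destruct Hx as [Hf Hd]. cbn [fst snd] in *.
      exists b, ((2 * a + t * b + Nn) / Q)%Z. split; [reflexivity|].
      apply (psi_S1 t e Q F Ht He HQ); auto.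
    + intros (j & k & -> & Hjk). change (Z.of_nat q) with Q in Hjk.
      destruct (S1_pre t e Q F Ht He HQ j k Hjk) as (a & Hf & Hd & Hk).
      exists (a, j). split.
      * unfold Fm, psi; cbn [fst snd]. unfold Nn. rewrite Hk. reflexivity.
      * apply Hlc. cbn [fst snd]. auto.
  - apply NoDup_nodup.
  - intros ab. rewrite Hl2, normK_E, HnM by auto. fold t e. split; [intros ->; reflexivity | apply eq_IZR].
  - rewrite length_map. unfold c_n.
    destruct Hdich as [(Hcn & Hall) | (Hcn & s & Hs)].
    + destruct (excluded_middle_informative (cn_cond q n)) as [_|Hc]; [|exfalso; apply Hc; rewrite Hnf; exact Hcn].
      unfold lc. rewrite filter_all. { field. }
      intros x Hx. apply Hall, Hl2, Hx.
    + destruct (excluded_middle_informative (cn_cond q n)) as [Hc|_]; [exfalso; apply Hcn; rewrite Hnf in Hc; exact Hc|].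
      rewrite (half_count (condz t Q Nn) s (fun x => f0z t e (snd x) (fst x) = M) l2 (NoDup_nodup _ _) Hl2 Hs).
      fold lc. rewrite mult_INR. simpl. field.
Qed.
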